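(* Fix $1\ge \rho_+>\rho_-\ge 0$. There exist constants $c<\infty$ and $b>0$, independent of $N$, such that for every positive integer $N$, every probability measure $\mu_N$ on $\{0,1\}^{[-N,N]}$ and every $t>0$, $$\|\mu_N S_t-\mu^{\rm st}_N\|\le c\,N\,e^{-bN^{-2}t}.$$
   Context: For a positive integer $N$, consider the continuous-time Markov process on $\{0,1\}^{[-N,N]}$ (with $[-N,N]$ the integers from $-N$ to $N$) with generator $L=L_0+L'$, where for $f:\{0,1\}^{[-N,N]}\to\mathbb R$, $$L_0 f(\eta)=\frac12\sum_{x=-N}^{N-1}[f(\eta^{(x,x+1)})-f(\eta)],$$ $\eta^{(x,x+1)}$ being $\eta$ with the values at $x$ and $x+1$ exchanged, and $$L'f(\eta)=\rho_+[f(\eta^{(+,N)})-f(\eta)]+(1-\rho_+)[f(\eta^{(-,N)})-f(\eta)]+\rho_-[f(\eta^{(+,-N)})-f(\eta)]+(1-\rho_-)[f(\eta^{(-,-N)})-f(\eta)],$$ where $\eta^{(+,x)}$ (resp. $\eta^{(-,x)}$) equals $\eta$ except that its value at $x$ is set to $1$ (resp. $0$). This process has a unique stationary probability measure $\mu^{\rm st}_N$. For a probability measure $\mu_N$, $\mu_NS_t$ denotes the law at time $t$ of the process started with law $\mu_N$. For a signed measure $\lambda$ on $\{0,1\}^{[-N,N]}$, $\|\lambda\|=\sum_\eta|\lambda(\eta)|$. *)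

(* Defs.v *)
From Stdlib Require Import Reals List Arith Bool.
Import ListNotations.
Open Scope R_scope.

(* A configuration eta in {0,1}^{[-N,N]} is encoded as a list of booleans of
   length 2N+1; site x in [-N,N] corresponds to index x+N in [0,2N]
   (true = 1, false = 0). *)
Definition config := list bool.

Fixpoint configs (n : nat) : list config :=
  match n with
  | O => [ [] ]
  | S m => flat_map (fun l => [false :: l; true :: l]) (configs m)
  end.

Definition sumc (n : nat) (f : config -> R) : R :=
  fold_right Rplus 0 (map f (configs n)).

Definition get (eta : config) (i : nat) : bool := nth i eta false.

Definition setc (eta : config) (i : nat) (b : bool) : config :=
  map (fun j => if Nat.eqb j i then b else get eta j) (seq 0 (length eta)).

Definition swapc (eta : config) (i : nat) : config :=
  map (fun j => if Nat.eqb j i then get eta (S i)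
                else if Nat.eqb j (S i) then get eta i else get eta j)
      (seq 0 (length eta)).

Definition gen (N : nat) (rp rm : R) (f : config -> R) (eta : config) : R :=
  / 2 * fold_right Rplus 0
          (map (fun i => f (swapc eta i) - f eta) (seq 0 (2 * N)))
  + rp * (f (setc eta (2 * N) true) - f eta)
  + (1 - rp) * (f (setc eta (2 * N) false) - f eta)
  + rm * (f (setc eta 0 true) - f eta)
  + (1 - rm) * (f (setc eta 0 false) - f eta).

Definition indic (eta : config) : config -> R :=
  fun zeta => if list_eq_dec bool_dec zeta eta then 1 else 0.

Definition genM (N : nat) (rp rm : R) (mu : config -> R) : config -> R :=
  fun eta => sumc (2 * N + 1) (fun zeta => mu zeta * gen N rp rm (indic eta) zeta).

Definition is_prob (N : nat) (mu : config -> R) : Prop :=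
  (forall eta, In eta (configs (2 * N + 1)) -> 0 <= mu eta) /\
  sumc (2 * N + 1) mu = 1.

(* nu = mu S_t = mu e^{tL}, defined entrywise by the exponential series *)
Definition is_law_at (N : nat) (rp rm : R) (mu : config -> R) (t : R)
    (nu : config -> R) : Prop :=
  forall eta, In eta (configs (2 * N + 1)) ->
    infinite_sum (fun k => t ^ k / INR (fact k) * Nat.iter k (genM N rp rm) mu eta)
                 (nu eta).

Definition is_stationary (N : nat) (rp rm : R) (mu : config -> R) : Prop :=
  is_prob N mu /\
  forall eta, In eta (configs (2 * N + 1)) -> genM N rp rm mu eta = 0.

Definition tvnorm (N : nat) (lam : config -> R) : R :=
  sumc (2 * N + 1) (fun eta => Rabs (lam eta)).

(* Main.v *)
Require Import Defs.
From Stdlib Require Import Reals List Arith Bool Lia Lra.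
Import ListNotations.
Open Scope R_scope.

Definition lsum {A} (l : list A) (f : A -> R) : R := fold_right Rplus 0 (map f l).

Lemma lsum_nil {A} (f : A -> R) : lsum [] f = 0.
Proof. reflexivity. Qed.
Lemma lsum_cons {A} a l (f : A -> R) : lsum (a :: l) f = f a + lsum l f.
Proof. reflexivity. Qed.
Lemma lsum_app {A} l1 l2 (f : A -> R) : lsum (l1 ++ l2) f = lsum l1 f + lsum l2 f.
Proof. induction l1; simpl; unfold lsum in *; simpl; try rewrite IHl1; lra. Qed.
Lemma lsum_ext_in {A} l (f g : A -> R) : (forall a, In a l -> f a = g a) -> lsum l f = lsum l g.
Proof. induction l; intros H; simpl. reflexivity. unfold lsum in *; simpl.
  rewrite H by (left; auto). rewrite IHl; auto. intros; apply H; right; auto. Qed.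
Lemma lsum_ext {A} l (f g : A -> R) : (forall a, f a = g a) -> lsum l f = lsum l g.
Proof. intros; apply lsum_ext_in; auto. Qed.
Lemma lsum_plus {A} l (f g : A -> R) : lsum l (fun a => f a + g a) = lsum l f + lsum l g.
Proof. induction l; unfold lsum in *; simpl. lra. rewrite IHl; lra. Qed.
Lemma lsum_minus {A} l (f g : A -> R) : lsum l (fun a => f a - g a) = lsum l f - lsum l g.
Proof. induction l; unfold lsum in *; simpl. lra. rewrite IHl; lra. Qed.
Lemma lsum_scal {A} l c (f : A -> R) : lsum l (fun a => c * f a) = c * lsum l f.
Proof. induction l; unfold lsum in *; simpl. lra. rewrite IHl; lra. Qed.
Lemma lsum_const {A} l c : lsum l (fun _ : A => c) = INR (length l) * c.
Proof. induction l. unfold lsum; simpl; lra. rewrite lsum_cons, IHl.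
  change (length (a::l)) with (S (length l)); rewrite S_INR; lra. Qed.
Lemma lsum_le {A} l (f g : A -> R) : (forall a, In a l -> f a <= g a) -> lsum l f <= lsum l g.
Proof. induction l; intros H; unfold lsum in *; simpl. lra.
  assert (f a <= g a) by (apply H; left; auto).
  assert (fold_right Rplus 0 (map f l) <= fold_right Rplus 0 (map g l)) by (apply IHl; intros; apply H; right; auto).
  lra. Qed.
Lemma lsum_abs {A} l (f : A -> R) : Rabs (lsum l f) <= lsum l (fun a => Rabs (f a)).
Proof. induction l; unfold lsum in *; simpl. rewrite Rabs_R0; lra.
  eapply Rle_trans. apply Rabs_triang. lra. Qed.
Lemma lsum_swap {A B} (l1 : list A) (l2 : list B) (F : A -> B -> R) :
  lsum l1 (fun a => lsum l2 (fun b => F a b)) = lsum l2 (fun b => lsum l1 (fun a => F a b)).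
Proof. induction l1; simpl.
  - rewrite lsum_nil. symmetry. rewrite (lsum_ext _ _ (fun _ => 0)). rewrite lsum_const; lra.
    intros; reflexivity.
  - rewrite lsum_cons, IHl1. rewrite <- lsum_plus. apply lsum_ext. intros; rewrite lsum_cons; lra. Qed.
Lemma lsum_sumf {A} l (G : nat -> A -> R) n :
  lsum l (fun a => sum_f_R0 (fun k => G k a) n) = sum_f_R0 (fun k => lsum l (G k)) n.
Proof. induction n; simpl. reflexivity. rewrite lsum_plus, IHn. reflexivity. Qed.

Lemma configs_len n l : In l (configs n) <-> length l = n.
Proof. revert l; induction n; intros l; simpl.
  - split. intros [H|[]]; subst; auto. destruct l; simpl; try discriminate; auto.
  - rewrite in_flat_map. split.
    + intros [x [Hx Hy]]. apply IHn in Hx. simpl in Hy. destruct Hy as [H|[H|[]]]; subst; simpl; auto.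
    + destruct l as [|b l]; simpl; try discriminate. intros H. exists l. split. apply IHn; lia.
      destruct b; simpl; auto.
Qed.

Lemma sumc_S m F : sumc (S m) F = sumc m (fun l => F (false :: l) + F (true :: l)).
Proof. unfold sumc. simpl. induction (configs m); simpl. reflexivity.
  rewrite IHl. lra. Qed.

Lemma sumc_lsum n F : sumc n F = lsum (configs n) F.
Proof. reflexivity. Qed.

Lemma sumc_indic n (c : config -> R) w : length w = n ->
  sumc n (fun e => c e * (if list_eq_dec bool_dec w e then 1 else 0)) = c w.
Proof. revert c w; induction n; intros c w Hw.
  - destruct w; simpl in Hw; try discriminate. unfold sumc; simpl.
    destruct (list_eq_dec bool_dec [] []); [lra|congruence].
  - rewrite sumc_S. destruct w as [|b w]; simpl in Hw; try discriminate.
    injection Hw as Hw.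
    destruct b.
    +
      transitivity (sumc n (fun l => c (true :: l) * (if list_eq_dec bool_dec w l then 1 else 0))).
      * unfold sumc. f_equal. apply map_ext. intros l.
        destruct (list_eq_dec bool_dec (true :: w) (false :: l)); try discriminate.
        destruct (list_eq_dec bool_dec (true :: w) (true :: l)); destruct (list_eq_dec bool_dec w l);
          subst; try congruence; try lra; try (injection e as e; congruence).
      * apply (IHn (fun l => c (true :: l))); auto.
    + transitivity (sumc n (fun l => c (false :: l) * (if list_eq_dec bool_dec w l then 1 else 0))).
      * unfold sumc. f_equal. apply map_ext. intros l.
        destruct (list_eq_dec bool_dec (false :: w) (true :: l)); try discriminate.
        destruct (list_eq_dec bool_dec (false :: w) (false :: l)); destruct (list_eq_dec bool_dec w l);
          subst; try congruence; try lra; try (injection e as e; congruence).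
      * apply (IHn (fun l => c (false :: l))); auto.
Qed.
Open Scope nat_scope.
Lemma nth_map_seq (f : nat -> bool) n j : nth j (map f (seq 0 n)) false = if j <? n then f j else false.
Proof. destruct (Nat.ltb_spec j n).
  - rewrite nth_indep with (d' := f 0) by (rewrite length_map, length_seq; auto).
    rewrite map_nth, seq_nth by auto. reflexivity.
  - apply nth_overflow. rewrite length_map, length_seq; auto. Qed.

Lemma len_setc z i b : length (setc z i b) = length z.
Proof. unfold setc. rewrite length_map, length_seq; auto. Qed.
Lemma len_swapc z i : length (swapc z i) = length z.
Proof. unfold swapc. rewrite length_map, length_seq; auto. Qed.

Lemma get_setc z i b j : get (setc z i b) j = if j <? length z then (if j =? i then b else get z j) else false.
Proof. unfold get at 1, setc. apply nth_map_seq. Qed.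
Lemma get_swapc z i j : get (swapc z i) j = if j <? length z then
  (if j =? i then get z (S i) else if j =? S i then get z i else get z j) else false.
Proof. unfold get at 1, swapc. apply nth_map_seq. Qed.

Lemma get_out z j : length z <= j -> get z j = false.
Proof. intros; apply nth_overflow; auto. Qed.

Lemma config_ext (a b : config) : length a = length b -> (forall j, j < length a -> get a j = get b j) -> a = b.
Proof. intros; apply nth_ext with false false; auto. Qed.

Definition tau (i x : nat) : nat := if x =? i then S i else if x =? S i then i else x.

Ltac bdestr := repeat (match goal with
  | |- context [?a =? ?b] => destruct (Nat.eqb_spec a b)
  | |- context [?a <? ?b] => destruct (Nat.ltb_spec a b)
  end; cbv iota beta).

Ltac scfg := repeat (progress (rewrite ?get_setc, ?get_swapc, ?len_setc, ?len_swapc in *)).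

Lemma swap_set z x c i : S i < length z -> x < length z ->
  swapc (setc z x c) i = setc (swapc z i) (tau i x) c.
Proof. intros Hi Hx. apply config_ext. scfg; auto.
  intros j Hj. unfold tau. destruct (Nat.eqb_spec x i); [subst|destruct (Nat.eqb_spec x (S i)); [subst|]];
  scfg; bdestr; subst; try lia; auto. Qed.

Lemma set_set_comm z x y c c' : x <> y ->
  setc (setc z x c) y c' = setc (setc z y c') x c.
Proof. intros H. apply config_ext. scfg; auto.
  intros j Hj. scfg. bdestr; subst; try lia; auto. Qed.

Lemma set_set_same z x c c' : setc (setc z x c) x c' = setc z x c'.
Proof. apply config_ext. scfg; auto.
  intros j Hj. scfg. bdestr; subst; try lia; auto. Qed.

Lemma set_get z x : x < length z -> setc z x (get z x) = z.
Proof. intros Hx. apply config_ext. scfg; auto.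
  intros j Hj. scfg. bdestr; subst; try lia; auto. Qed.
Open Scope R_scope.

Lemma abs5 a b c d e : Rabs (a + b + c + d + e) <= Rabs a + Rabs b + Rabs c + Rabs d + Rabs e.
Proof. pose proof (Rabs_triang (a+b+c+d) e). pose proof (Rabs_triang (a+b+c) d).
  pose proof (Rabs_triang (a+b) c). pose proof (Rabs_triang a b). lra. Qed.

Section Gen.
Variables (N : nat) (rp rm : R).
Hypotheses (Hp : rp <= 1) (Hpm : rm < rp) (Hm : 0 <= rm).

Lemma fold_lsum {A} (l : list A) f : fold_right Rplus 0 (map f l) = lsum l f.
Proof. reflexivity. Qed.

Lemma gen_ext_len f g z : (forall w, length w = length z -> f w = g w) ->
  gen N rp rm f z = gen N rp rm g z.
Proof. intros H. unfold gen. rewrite !fold_lsum.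
  rewrite (lsum_ext _ (fun i => f (swapc z i) - f z) (fun i => g (swapc z i) - g z)).
  rewrite !H by (rewrite ?len_setc; auto). reflexivity.
  intros i. rewrite !H by (rewrite ?len_swapc; auto). reflexivity. Qed.

Lemma gen_plus f g z : gen N rp rm (fun w => f w + g w) z = gen N rp rm f z + gen N rp rm g z.
Proof. unfold gen. rewrite !fold_lsum.
  rewrite (lsum_ext _ (fun i => f (swapc z i) + g (swapc z i) - (f z + g z))
     (fun i => (f (swapc z i) - f z) + (g (swapc z i) - g z))) by (intros; ring).
  rewrite lsum_plus. ring. Qed.

Lemma gen_scal a f z : gen N rp rm (fun w => a * f w) z = a * gen N rp rm f z.
Proof. unfold gen. rewrite !fold_lsum.
  rewrite (lsum_ext _ (fun i => a * f (swapc z i) - a * f z)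
     (fun i => a * (f (swapc z i) - f z))) by (intros; ring).
  rewrite lsum_scal. ring. Qed.

Lemma gen_zero z : gen N rp rm (fun _ => 0) z = 0.
Proof. unfold gen. rewrite !fold_lsum.
  rewrite (lsum_ext _ (fun i => 0 - 0) (fun i => 0 * 0)) by (intros; ring).
  rewrite lsum_scal. ring. Qed.

Lemma gen_lsum {A} (l : list A) F z :
  gen N rp rm (fun w => lsum l (fun e => F e w)) z = lsum l (fun e => gen N rp rm (F e) z).
Proof. induction l; simpl.
  - apply gen_zero.
  - rewrite lsum_cons. rewrite <- IHl. rewrite <- gen_plus. apply gen_ext_len. intros; rewrite lsum_cons; auto.
Qed.

Lemma gen_sumf c G m z :
  gen N rp rm (fun w => sum_f_R0 (fun k => c k * G k w) m) z = sum_f_R0 (fun k => c k * gen N rp rm (G k) z) m.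
Proof. induction m; simpl.
  - apply gen_scal.
  - rewrite <- IHm, <- gen_scal, <- gen_plus. reflexivity. Qed.

Definition qq := INR N + 2.
Lemma qq_pos : 0 < qq.
Proof. unfold qq. pose proof (pos_INR N). lra. Qed.

Definition Qop (g : config -> R) : config -> R := fun w => g w + gen N rp rm g w / qq.

Lemma Q_expand g w : Qop g w = / qq * (/ 2 * lsum (seq 0 (2 * N)) (fun i => g (swapc w i))
   + rp * g (setc w (2 * N) true) + (1 - rp) * g (setc w (2 * N) false)
   + rm * g (setc w 0 true) + (1 - rm) * g (setc w 0 false)).
Proof. unfold Qop, gen. rewrite fold_lsum, lsum_minus, lsum_const, length_seq, mult_INR.
  pose proof qq_pos. unfold qq in *. simpl (INR 2). field. lra. Qed.

Lemma gen_bound g M z : (forall w, Rabs (g w) <= M) -> Rabs (gen N rp rm g z) <= 2 * qq * M.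
Proof. intros H. unfold gen. rewrite fold_lsum.
  assert (Hs: Rabs (lsum (seq 0 (2 * N)) (fun i => g (swapc z i) - g z)) <= INR (2 * N) * (2 * M)).
  { eapply Rle_trans. apply lsum_abs. rewrite <- (length_seq (2*N) 0) at 2. rewrite <- lsum_const.
    apply lsum_le. intros. unfold Rminus. eapply Rle_trans. apply Rabs_triang. rewrite Rabs_Ropp.
    pose proof (H (swapc z a)); pose proof (H z); lra. }
  rewrite mult_INR in Hs. simpl (INR 2) in Hs.
  pose proof (H z). pose proof (H (setc z (2*N) true)). pose proof (H (setc z (2*N) false)).
  pose proof (H (setc z 0 true)). pose proof (H (setc z 0 false)).
  unfold qq.
  eapply Rle_trans; [apply abs5|].
  rewrite !Rabs_mult. rewrite (Rabs_right (/2)) by lra. rewrite (Rabs_right rp) by lra.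
  rewrite (Rabs_right (1-rp)) by lra. rewrite (Rabs_right rm) by lra. rewrite (Rabs_right (1-rm)) by lra.
  assert (Hd: forall a b, Rabs (g a - g b) <= 2 * M).
  { intros. unfold Rminus. eapply Rle_trans. apply Rabs_triang. rewrite Rabs_Ropp.
    pose proof (H a); pose proof (H b); lra. }
  pose proof (Hd (setc z (2*N) true) z). pose proof (Hd (setc z (2*N) false) z).
  pose proof (Hd (setc z 0 true) z). pose proof (Hd (setc z 0 false) z).
  assert (0 <= rp) by lra.
  assert (rp * Rabs (g (setc z (2 * N) true) - g z) <= rp * (2*M)) by (apply Rmult_le_compat_l; lra).
  assert ((1-rp) * Rabs (g (setc z (2 * N) false) - g z) <= (1-rp) * (2*M)) by (apply Rmult_le_compat_l; lra).
  assert (rm * Rabs (g (setc z 0 true) - g z) <= rm * (2*M)) by (apply Rmult_le_compat_l; lra).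
  assert ((1-rm) * Rabs (g (setc z 0 false) - g z) <= (1-rm) * (2*M)) by (apply Rmult_le_compat_l; lra).
  lra. Qed.

Lemma Q_bound g : (forall w, Rabs (g w) <= 1) -> forall w, Rabs (Qop g w) <= 1.
Proof. intros H w. rewrite Q_expand. pose proof qq_pos.
  rewrite Rabs_mult, Rabs_right by (left; apply Rinv_0_lt_compat; auto).
  apply Rmult_le_reg_l with qq; auto. rewrite <- Rmult_assoc, Rinv_r by lra.
  assert (Hs: Rabs (lsum (seq 0 (2 * N)) (fun i => g (swapc w i))) <= INR (2 * N)).
  { eapply Rle_trans. apply lsum_abs. rewrite <- (length_seq (2*N) 0) at 2. rewrite <- (Rmult_1_r (INR _)).
    rewrite <- lsum_const. apply lsum_le. intros; auto. }
  rewrite mult_INR in Hs. simpl (INR 2) in Hs. rewrite Rmult_1_l. unfold qq.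
  eapply Rle_trans; [apply abs5|].
  rewrite !Rabs_mult. rewrite (Rabs_right (/2)) by lra. rewrite (Rabs_right rp) by lra.
  rewrite (Rabs_right (1-rp)) by lra. rewrite (Rabs_right rm) by lra. rewrite (Rabs_right (1-rm)) by lra.
  pose proof (H (setc w (2*N) true)). pose proof (H (setc w (2*N) false)).
  pose proof (H (setc w 0 true)). pose proof (H (setc w 0 false)).
  assert (0 <= rp) by lra.
  assert (rp * Rabs (g (setc w (2 * N) true)) <= rp * 1) by (apply Rmult_le_compat_l; lra).
  assert ((1-rp) * Rabs (g (setc w (2 * N) false)) <= (1-rp) * 1) by (apply Rmult_le_compat_l; lra).
  assert (rm * Rabs (g (setc w 0 true)) <= rm * 1) by (apply Rmult_le_compat_l; lra).
  assert ((1-rm) * Rabs (g (setc w 0 false)) <= (1-rm) * 1) by (apply Rmult_le_compat_l; lra).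
  lra. Qed.

Let n := (2 * N + 1)%nat.

Lemma dual1 (f nu : config -> R) :
  sumc n (fun eta => f eta * genM N rp rm nu eta) = sumc n (fun zeta => nu zeta * gen N rp rm f zeta).
Proof. unfold genM. fold n. rewrite !sumc_lsum.
  rewrite (lsum_ext _ (fun eta => f eta * lsum (configs n) (fun zeta => nu zeta * gen N rp rm (indic eta) zeta))
    (fun eta => lsum (configs n) (fun zeta => nu zeta * (f eta * gen N rp rm (indic eta) zeta)))).
  2: { intros eta. rewrite <- lsum_scal. apply lsum_ext. intros; ring. }
  rewrite lsum_swap. apply lsum_ext_in. intros zeta Hz. rewrite lsum_scal. f_equal.
  rewrite <- (lsum_ext _ (fun e => gen N rp rm (fun w => f e * indic e w) zeta)) by (intros; apply gen_scal).
  rewrite <- gen_lsum. apply gen_ext_len. intros w Hw.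
  apply configs_len in Hz. unfold indic. rewrite <- sumc_lsum. apply sumc_indic. congruence. Qed.

Lemma dualk k (f nu : config -> R) :
  sumc n (fun eta => f eta * Nat.iter k (genM N rp rm) nu eta) =
  sumc n (fun zeta => nu zeta * Nat.iter k (gen N rp rm) f zeta).
Proof. revert f; induction k; intros f; simpl.
  - unfold sumc. f_equal. apply map_ext. intros; ring.
  - rewrite dual1.
    transitivity (sumc n (fun zeta => gen N rp rm f zeta * Nat.iter k (genM N rp rm) nu zeta)).
    { unfold sumc. f_equal. apply map_ext. intros; ring. }
    rewrite IHk. rewrite <- Nat.iter_succ_r. reflexivity. Qed.

End Gen.

Section Contr.
Variables (N : nat) (rp rm : R).
Hypotheses (Hp : rp <= 1) (Hpm : rm < rp) (Hm : 0 <= rm) (HN : (1 <= N)%nat).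

Let n := (2 * N + 1)%nat.

Definition Lip (d : nat -> R) (g : config -> R) : Prop :=
  forall z, length z = n -> forall x, (x < n)%nat -> Rabs (g (setc z x true) - g (setc z x false)) <= d x.

Definition Kop (d : nat -> R) : nat -> R := fun x =>
  / qq N * (/ 2 * lsum (seq 0 (2 * N)) (fun i => d (tau i x)) + (if x =? 2 * N then 0 else d x)
            + (if x =? 0 then 0 else d x)).

Lemma tau_lt i x : (i < 2 * N)%nat -> (x < n)%nat -> (tau i x < n)%nat.
Proof. unfold n, tau. intros. destruct (Nat.eqb_spec x i); [|destruct (Nat.eqb_spec x (S i))]; lia. Qed.

Lemma res_bound d g z x y c : Lip d g -> length z = n -> (x < n)%nat -> (y < n)%nat ->
  Rabs (g (setc (setc z x true) y c) - g (setc (setc z x false) y c)) <= (if x =? y then 0 else d x).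
Proof. intros HL Hz Hx Hy. destruct (Nat.eqb_spec x y).
  - subst. rewrite !set_set_same. unfold Rminus. rewrite Rplus_opp_r, Rabs_R0. lra.
  - rewrite !(set_set_comm z x y) by auto. apply HL; auto. rewrite len_setc; auto. Qed.

Lemma Lip_Q d g : Lip d g -> Lip (Kop d) (Qop N rp rm g).
Proof. intros HL z Hz x Hx. rewrite !Q_expand. unfold Kop.
  pose proof (qq_pos N) as Hq.
  set (a := setc z x true). set (b := setc z x false).
  match goal with |- Rabs (?A - ?B) <= _ => replace (A - B) with (/ qq N * (/2 * lsum (seq 0 (2 * N)) (fun i => g (swapc a i) - g (swapc b i))
     + (rp * (g (setc a (2*N) true) - g (setc b (2*N) true)) + (1 - rp) * (g (setc a (2*N) false) - g (setc b (2*N) false)))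
     + (rm * (g (setc a 0 true) - g (setc b 0 true)) + (1 - rm) * (g (setc a 0 false) - g (setc b 0 false)))))
     by (rewrite lsum_minus; ring) end.
  rewrite Rabs_mult, (Rabs_right (/ qq N)) by (left; apply Rinv_0_lt_compat; auto).
  apply Rmult_le_compat_l. left; apply Rinv_0_lt_compat; auto.
  assert (HS: Rabs (lsum (seq 0 (2 * N)) (fun i => g (swapc a i) - g (swapc b i))) <= lsum (seq 0 (2 * N)) (fun i => d (tau i x))).
  { eapply Rle_trans. apply lsum_abs. apply lsum_le. intros i Hi. apply in_seq in Hi.
    unfold a, b. rewrite !swap_set by (unfold n in Hz; lia). apply HL.
    rewrite len_swapc; auto. apply tau_lt; lia. }
  assert (Hn1: (2 * N < n)%nat) by (unfold n; lia). assert (Hn0: (0 < n)%nat) by (unfold n; lia).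
  pose proof (res_bound d g z x (2*N) true HL Hz Hx Hn1) as R1.
  pose proof (res_bound d g z x (2*N) false HL Hz Hx Hn1) as R2.
  pose proof (res_bound d g z x 0 true HL Hz Hx Hn0) as R3.
  pose proof (res_bound d g z x 0 false HL Hz Hx Hn0) as R4.
  fold a b in R1, R2, R3, R4.
  assert (E1: Rabs (rp * (g (setc a (2*N) true) - g (setc b (2*N) true)) + (1 - rp) * (g (setc a (2*N) false) - g (setc b (2*N) false)))
     <= (if x =? 2 * N then 0 else d x)).
  { eapply Rle_trans. apply Rabs_triang. rewrite !Rabs_mult, (Rabs_right rp), (Rabs_right (1-rp)) by lra.
    assert (0 <= rp) by lra.
    assert (rp * Rabs (g (setc a (2 * N) true) - g (setc b (2 * N) true)) <= rp * (if x =? 2 * N then 0 else d x)) by (apply Rmult_le_compat_l; lra).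
    assert ((1-rp) * Rabs (g (setc a (2 * N) false) - g (setc b (2 * N) false)) <= (1-rp) * (if x =? 2 * N then 0 else d x)) by (apply Rmult_le_compat_l; lra).
    lra. }
  assert (E2: Rabs (rm * (g (setc a 0 true) - g (setc b 0 true)) + (1 - rm) * (g (setc a 0 false) - g (setc b 0 false)))
     <= (if x =? 0 then 0 else d x)).
  { eapply Rle_trans. apply Rabs_triang. rewrite !Rabs_mult, (Rabs_right rm), (Rabs_right (1-rm)) by lra.
    assert (rm * Rabs (g (setc a 0 true) - g (setc b 0 true)) <= rm * (if x =? 0 then 0 else d x)) by (apply Rmult_le_compat_l; lra).
    assert ((1-rm) * Rabs (g (setc a 0 false) - g (setc b 0 false)) <= (1-rm) * (if x =? 0 then 0 else d x)) by (apply Rmult_le_compat_l; lra).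
    lra. }
  eapply Rle_trans. apply Rabs_triang. eapply Rle_trans. apply Rplus_le_compat_r. apply Rabs_triang.
  rewrite Rabs_mult, (Rabs_right (/2)) by lra. lra. Qed.

End Contr.

Lemma tau_sum (F : nat -> R) m x :
  lsum (seq 0 m) (fun i => F (tau i x) - F x) =
  (if (1 <=? x) && (x <=? m) then F (x - 1)%nat - F x else 0) + (if x <? m then F (S x) - F x else 0).
Proof. induction m.
  - simpl. rewrite lsum_nil. destruct x; simpl; lra.
  - rewrite seq_S, lsum_app, IHm, lsum_cons, lsum_nil. simpl (0 + m)%nat. unfold tau.
    repeat (match goal with
     | |- context [?a =? ?b] => destruct (Nat.eqb_spec a b)
     | |- context [?a <? ?b] => destruct (Nat.ltb_spec a b)
     | |- context [?a <=? ?b] => destruct (Nat.leb_spec a b)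
     end; cbv iota beta; simpl andb); subst; try lia; try lra.
    all: cbn [andb]; try (replace (S m - 1)%nat with m by lia); lra.
Qed.

Section Lyap.
Variables (N : nat) (rp rm : R).
Hypotheses (HN : (1 <= N)%nat).
Let n := (2 * N + 1)%nat.

Definition hh (x : nat) : R := (INR x + 1) * (2 * INR N + 1 - INR x).
Definition Hmax : R := (INR N + 1) ^ 2.

Lemma hh_bounds x : (x < n)%nat -> 1 <= hh x <= Hmax.
Proof. intros Hx. unfold hh, Hmax, n in *. assert (INR x <= INR (2 * N)) by (apply le_INR; lia).
  rewrite mult_INR in H. simpl (INR 2) in H.
  pose proof (pos_INR x). split.
  - assert (0 <= INR x * (2 * INR N - INR x)) by (apply Rmult_le_pos; lra). nra.
  - pose proof (Rle_0_sqr (INR N - INR x)). unfold Rsqr in *. nra. Qed.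

Lemma K_h x : (x < n)%nat -> Kop N hh x <= hh x - / qq N.
Proof. intros Hx. unfold Kop.
  pose proof (qq_pos N) as Hq.
  assert (HE: / 2 * lsum (seq 0 (2 * N)) (fun i => hh (tau i x)) + (if x =? 2 * N then 0 else hh x)
            + (if x =? 0 then 0 else hh x) <= qq N * hh x - 1).
  { replace (lsum (seq 0 (2 * N)) (fun i => hh (tau i x))) with
      (lsum (seq 0 (2 * N)) (fun i => hh (tau i x) - hh x) + INR (2 * N) * hh x).
    2:{ rewrite lsum_minus, lsum_const, length_seq. ring. }
    rewrite tau_sum. rewrite mult_INR. unfold qq, hh. unfold n in Hx.
    assert (H1: (1 <= N)%nat) by auto. apply le_INR in H1. simpl (INR 1) in H1.
    destruct (Nat.eqb_spec x 0); [subst | destruct (Nat.eqb_spec x (2*N)); [subst|]].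
    - replace (1 <=? 0)%nat with false by reflexivity.
      replace (0 <? 2 * N)%nat with true by (symmetry; apply Nat.ltb_lt; lia).
      replace (0 =? 2 * N)%nat with false by (symmetry; apply Nat.eqb_neq; lia).
      replace (0 =? 0)%nat with true by reflexivity. cbn [andb].
      simpl (INR 0). simpl (INR 1). rewrite ?mult_INR. simpl (INR 2). nra.
    - replace (1 <=? 2 * N)%nat with true by (symmetry; apply Nat.leb_le; lia).
      replace (2 * N <=? 2 * N)%nat with true by (symmetry; apply Nat.leb_le; lia).
      replace (2 * N <? 2 * N)%nat with false by (symmetry; apply Nat.ltb_ge; lia).
      replace (2 * N =? 2 * N)%nat with true by (symmetry; apply Nat.eqb_eq; lia).
      replace (2 * N =? 0)%nat with false by (symmetry; apply Nat.eqb_neq; lia). cbn [andb].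
      rewrite minus_INR by lia. rewrite ?mult_INR. simpl (INR 2). simpl (INR 1). nra.
    - replace (1 <=? x)%nat with true by (symmetry; apply Nat.leb_le; lia).
      replace (x <=? 2 * N)%nat with true by (symmetry; apply Nat.leb_le; lia).
      replace (x <? 2 * N)%nat with true by (symmetry; apply Nat.ltb_lt; lia).
      replace (x =? 2 * N)%nat with false by (symmetry; apply Nat.eqb_neq; lia).
      replace (x =? 0)%nat with false by (symmetry; apply Nat.eqb_neq; lia). cbn [andb].
      rewrite minus_INR by lia. simpl (INR 1). simpl (INR 2). rewrite (S_INR x). right. field.
  }
  apply Rle_trans with (/ qq N * (qq N * hh x - 1)).
  apply Rmult_le_compat_l; auto. left; apply Rinv_0_lt_compat; auto.
  right. field. lra. Qed.
End Lyap.

Section Iter.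
Variables (N : nat) (rp rm : R).
Hypotheses (Hp : rp <= 1) (Hpm : rm < rp) (Hm : 0 <= rm) (HN : (1 <= N)%nat).
Let n := (2 * N + 1)%nat.

Lemma Kop_mono d d' x : (forall y, (y < n)%nat -> d y <= d' y) -> (x < n)%nat -> Kop N d x <= Kop N d' x.
Proof. intros H Hx. unfold Kop. pose proof (qq_pos N).
  apply Rmult_le_compat_l. left; apply Rinv_0_lt_compat; auto.
  assert (lsum (seq 0 (2 * N)) (fun i => d (tau i x)) <= lsum (seq 0 (2 * N)) (fun i => d' (tau i x))).
  { apply lsum_le. intros i Hi. apply in_seq in Hi. apply H. apply tau_lt; unfold n in *; lia. }
  assert (d x <= d' x) by auto.
  destruct (x =? 2 * N)%nat; destruct (x =? 0)%nat; lra. Qed.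

Lemma Kop_scal c d x : Kop N (fun y => c * d y) x = c * Kop N d x.
Proof. unfold Kop. rewrite lsum_scal. destruct (x =? 2 * N)%nat; destruct (x =? 0)%nat; ring. Qed.

Definition theta := 1 - / (qq N * Hmax N).

Lemma theta_pos : 0 <= theta.
Proof. unfold theta, qq, Hmax. pose proof (pos_INR N).
  assert (1 <= (INR N + 2) * (INR N + 1) ^ 2) by nra.
  assert (/ ((INR N + 2) * (INR N + 1) ^ 2) <= 1).
  { rewrite <- Rinv_1. apply Rinv_le_contravar; lra. } lra. Qed.

Lemma K_h_theta x : (x < n)%nat -> Kop N (hh N) x <= theta * hh N x.
Proof. intros Hx. eapply Rle_trans. apply K_h; auto.
  pose proof (hh_bounds N HN x Hx). pose proof (qq_pos N).
  assert (0 < Hmax N) by lra.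
  unfold theta. assert (hh N x * / (qq N * Hmax N) <= / qq N).
  { rewrite Rinv_mult. replace (/ qq N) with (Hmax N * (/ qq N * / Hmax N)) at 2 by (field; lra).
    apply Rmult_le_compat_r; try lra. apply Rmult_le_pos; left; apply Rinv_0_lt_compat; auto. }
  nra. Qed.

Lemma Kit_bound j x : (x < n)%nat -> Nat.iter j (Kop N) (fun _ => 2) x <= 2 * theta ^ j * hh N x.
Proof. revert x; induction j; intros x Hx.
  - simpl. pose proof (hh_bounds N HN x Hx). lra.
  - simpl Nat.iter. eapply Rle_trans. apply Kop_mono with (d' := fun y => (2 * theta ^ j) * hh N y); auto.
    rewrite Kop_scal. pose proof theta_pos. pose proof (pow_le theta j H).
    eapply Rle_trans. apply Rmult_le_compat_l. lra. apply K_h_theta; auto.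
    simpl. lra. Qed.

Lemma Lip_iter (s : config -> R) j : Lip N (fun _ => 2) s ->
  Lip N (Nat.iter j (Kop N) (fun _ => 2)) (Nat.iter j (Qop N rp rm) s).
Proof. intros H; induction j; simpl; auto. apply Lip_Q; auto. Qed.

Definition zj (z : config) (j : nat) : config :=
  map (fun i => if (i <? j)%nat then false else get z i) (seq 0 (length z)).

Lemma len_zj z j : length (zj z j) = length z.
Proof. unfold zj. rewrite length_map, length_seq; auto. Qed.
Lemma get_zj z j i : get (zj z j) i = if (i <? length z)%nat then (if (i <? j)%nat then false else get z i) else false.
Proof. unfold get at 1, zj. apply nth_map_seq. Qed.

Lemma zj_0 z : zj z 0 = z.
Proof. apply config_ext. apply len_zj. intros i Hi. rewrite len_zj in Hi. rewrite get_zj.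
  destruct (Nat.ltb_spec i (length z)); try lia. reflexivity. Qed.

Lemma zj_full z : zj z (length z) = repeat false (length z).
Proof. apply config_ext. rewrite len_zj, repeat_length; auto. intros i Hi. rewrite len_zj in Hi. rewrite get_zj.
  unfold get. rewrite nth_repeat. destruct (Nat.ltb_spec i (length z)); reflexivity. Qed.

Lemma zj_S z j : (j < length z)%nat -> zj z (S j) = setc (zj z j) j false.
Proof. intros Hj. apply config_ext. rewrite len_setc, !len_zj; auto. intros i Hi. rewrite len_zj in Hi.
  rewrite get_setc, len_zj, !get_zj.
  repeat (match goal with
     | |- context [?a =? ?b] => destruct (Nat.eqb_spec a b)
     | |- context [?a <? ?b] => destruct (Nat.ltb_spec a b)
     end; cbv iota beta); subst; try lia; auto. Qed.

Lemma path_bound d g z : Lip N d g -> length z = n ->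
  Rabs (g z - g (repeat false n)) <= lsum (seq 0 n) d.
Proof. intros HL Hz.
  assert (forall j, (j <= n)%nat -> Rabs (g z - g (zj z j)) <= lsum (seq 0 j) d).
  { induction j; intros Hj.
    - rewrite zj_0. unfold Rminus. rewrite Rplus_opp_r, Rabs_R0. simpl (seq 0 0). rewrite lsum_nil. lra.
    - rewrite seq_S, lsum_app. replace (lsum [(0+j)%nat] d) with (d j) by (unfold lsum; simpl; ring).
      assert (Hs: Rabs (g (zj z j) - g (zj z (S j))) <= d j).
      { rewrite zj_S by lia. set (w := zj z j).
        assert (Hw: length w = n) by (unfold w; rewrite len_zj; auto).
        pose proof (HL w Hw j ltac:(lia)) as Hd.
        rewrite <- (set_get w j) at 1 by lia.
        destruct (get w j); auto. unfold Rminus. rewrite Rplus_opp_r, Rabs_R0.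
        eapply Rle_trans; [apply Rabs_pos| apply Hd]. }
      pose proof (IHj ltac:(lia)).
      replace (g z - g (zj z (S j))) with ((g z - g (zj z j)) + (g (zj z j) - g (zj z (S j)))) by ring.
      eapply Rle_trans. apply Rabs_triang. lra. }
  replace (repeat false n) with (zj z n). apply H; lia. rewrite <- Hz. apply zj_full. Qed.

End Iter.

From Coquelicot Require Import Coquelicot.
Lemma ser_plus a b A B : is_series a A -> is_series b B -> is_series (fun k => a k + b k) (A + B).
Proof. intros; apply (is_series_plus a b A B); auto. Qed.
Lemma ser_scal c a A : is_series a A -> is_series (fun k => c * a k) (c * A).
Proof. intros; apply (is_series_scal c a A); auto. Qed.
Lemma ser_minus a b A B : is_series a A -> is_series b B -> is_series (fun k => a k - b k) (A - B).
Proof. intros; apply (is_series_minus a b A B); auto. Qed.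
Lemma ser_zero : is_series (fun _ => 0) 0.
Proof. apply is_series_Reals. intros eps He. exists O. intros. unfold R_dist.
  assert (E: forall m, sum_f_R0 (fun _ => 0) m = 0).
  { induction m; simpl. reflexivity. rewrite IHm; ring. }
  rewrite E. rewrite Rminus_0_r, Rabs_R0; auto. Qed.
Lemma ser_le a b A B : (forall k, a k <= b k) -> is_series a A -> is_series b B -> A <= B.
Proof. intros H Ha Hb. apply is_series_Reals in Ha, Hb.
  apply Rle_cv_lim with (fun n => sum_f_R0 a n) (fun n => sum_f_R0 b n); auto.
  intros; apply sum_Rle; auto. Qed.
Lemma ser_exp x : is_series (fun k => x ^ k / INR (Factorial.fact k)) (exp x).
Proof. pose proof (is_exp_Reals x) as H. unfold is_pseries in H.
  eapply is_series_ext; [|exact H]. intros k. simpl. rewrite pow_n_pow. unfold scal; simpl.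
  unfold mult; simpl. unfold Rdiv. ring. Qed.
Lemma ser_unique (a : nat -> R) (A B : R) : is_series a A -> is_series a B -> A = B.
Proof. intros H1 H2. apply is_series_unique in H1. apply is_series_unique in H2. congruence. Qed.

Lemma ser_list {A} (l : list A) (a : A -> nat -> R) (L : A -> R) :
  (forall e, In e l -> is_series (a e) (L e)) ->
  is_series (fun k => lsum l (fun e => a e k)) (lsum l L).
Proof. induction l; intros H.
  - eapply is_series_ext; [|apply ser_zero]. intros; reflexivity.
  - rewrite lsum_cons. eapply is_series_ext; [|apply ser_plus; [apply H; left; auto| apply IHl; intros; apply H; right; auto]].
    intros k. rewrite lsum_cons. reflexivity. Qed.

Fixpoint bin (n k : nat) : R :=
  match n, k with
  | _, O => 1
  | O, S _ => 0
  | S n', S k' => bin n' k' + bin n' (S k')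
  end.

Lemma bin_over n k : (n < k)%nat -> bin n k = 0.
Proof. revert k; induction n; intros k Hk; destruct k; try lia; simpl; auto.
  rewrite !IHn by lia. ring. Qed.

Lemma bin_fact n k : (k <= n)%nat -> bin n k = INR (Factorial.fact n) / (INR (Factorial.fact k) * INR (Factorial.fact (n - k))).
Proof. revert k; induction n; intros k Hk.
  - destruct k; try lia. simpl. field.
  - destruct k.
    + simpl bin. rewrite Nat.sub_0_r. simpl (Factorial.fact 0). simpl (INR 1). field. apply INR_fact_neq_0.
    + simpl bin. destruct (Nat.eq_dec k n).
      * subst. rewrite (bin_over n (S n)) by lia. rewrite IHn by lia. rewrite Nat.sub_diag.
        replace (S n - S n)%nat with O by lia. field. repeat split; apply INR_fact_neq_0.
      * rewrite !IHn by lia. simpl (S n - S k)%nat.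
        replace (n - k)%nat with (S (n - S k)) by lia.
        change (Factorial.fact (S n)) with (S n * Factorial.fact n)%nat.
        change (Factorial.fact (S k)) with (S k * Factorial.fact k)%nat.
        change (Factorial.fact (S (n - S k))) with (S (n - S k) * Factorial.fact (n - S k))%nat.
        rewrite !mult_INR. rewrite !S_INR. rewrite minus_INR by lia. rewrite S_INR.
        pose proof (INR_fact_neq_0 n). pose proof (INR_fact_neq_0 k). pose proof (INR_fact_neq_0 (n - S k)).
        pose proof (pos_INR k). pose proof (pos_INR n).
        assert (INR k + 1 <= INR n) by (rewrite <- S_INR; apply le_INR; lia).
        field. repeat split; lra.
Qed.

Lemma bin_n0 n : bin n 0 = 1.
Proof. destruct n; reflexivity. Qed.

Lemma sum_shift (f : nat -> R) n : sum_f_R0 f (S n) = f O + sum_f_R0 (fun k => f (S k)) n.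
Proof. induction n. simpl. ring. rewrite tech5, IHn. simpl. ring. Qed.

Lemma pascal_sum (b : nat -> R) n :
  sum_f_R0 (fun k => bin n k * b k) n + sum_f_R0 (fun k => bin n k * b (S k)) n =
  sum_f_R0 (fun k => bin (S n) k * b k) (S n).
Proof.
  rewrite (sum_shift (fun k => bin (S n) k * b k)).
  rewrite (sum_eq (fun k => bin (S n) (S k) * b (S k)) (fun k => bin n k * b (S k) + bin n (S k) * b (S k)))
    by (intros; simpl; ring).
  rewrite sum_plus.
  replace (sum_f_R0 (fun k => bin n k * b k) n) with (sum_f_R0 (fun k => bin n k * b k) (S n))
    by (rewrite tech5, bin_over by lia; ring).
  rewrite sum_shift. rewrite !bin_n0. ring. Qed.

Section QB.
Variables (N : nat) (rp rm : R).
Hypotheses (Hp : rp <= 1) (Hpm : rm < rp) (Hm : 0 <= rm).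
Let n := (2 * N + 1)%nat.

Lemma Q_binom m g w : Nat.iter m (Qop N rp rm) g w =
  sum_f_R0 (fun k => bin m k * (/ qq N) ^ k * Nat.iter k (gen N rp rm) g w) m.
Proof. revert w; induction m; intros w.
  - simpl. ring.
  - set (b := fun k => (/ qq N) ^ k * Nat.iter k (gen N rp rm) g w).
    transitivity (sum_f_R0 (fun k => bin m k * b k) m + sum_f_R0 (fun k => bin m k * b (S k)) m).
    + change (Nat.iter (S m) (Qop N rp rm) g w) with (Qop N rp rm (Nat.iter m (Qop N rp rm) g) w).
      unfold Qop. rewrite IHm. f_equal.
      { apply sum_eq. intros; unfold b; ring. }
      rewrite (gen_ext_len N rp rm _ (fun w' => sum_f_R0 (fun k => (bin m k * (/ qq N) ^ k) * Nat.iter k (gen N rp rm) g w') m))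
        by (intros; apply IHm).
      rewrite gen_sumf. unfold Rdiv. rewrite Rmult_comm, scal_sum. apply sum_eq. intros i _.
      unfold b. simpl. match goal with |- context [gen N rp rm ?f w] => change (gen N rp rm f w) with (gen N rp rm (Nat.iter i (gen N rp rm) g) w) end. ring.
    + rewrite pascal_sum. apply sum_eq. intros; unfold b; ring.
Qed.

Lemma iter_gen_bound k g M : (forall w, Rabs (g w) <= M) -> forall w, Rabs (Nat.iter k (gen N rp rm) g w) <= (2 * qq N) ^ k * M.
Proof. revert g M. induction k; intros g M H w.
  - simpl. rewrite Rmult_1_l. auto.
  - change (Nat.iter (S k) (gen N rp rm) g w) with (Nat.iter k (gen N rp rm) (gen N rp rm g) w) || rewrite Nat.iter_succ_r.
    eapply Rle_trans. apply IHk with (M := 2 * qq N * M). intros; apply gen_bound; auto.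
    simpl. lra. Qed.

Lemma iterQ_bound j g : (forall w, Rabs (g w) <= 1) -> forall w, Rabs (Nat.iter j (Qop N rp rm) g w) <= 1.
Proof. intros H; induction j; simpl; auto. intros w. apply Q_bound; auto. Qed.

Lemma mst_inv mst : is_stationary N rp rm mst -> forall j g,
  sumc n (fun z => mst z * Nat.iter j (Qop N rp rm) g z) = sumc n (fun z => mst z * g z).
Proof. intros [_ Hst] j. induction j; intros g. reflexivity.
  change (Nat.iter (S j) (Qop N rp rm) g) with (Qop N rp rm (Nat.iter j (Qop N rp rm) g)).
  rewrite <- (IHj g). set (h := Nat.iter j (Qop N rp rm) g). unfold Qop.
  rewrite !sumc_lsum.
  rewrite (lsum_ext _ _ (fun z => mst z * h z + / qq N * (mst z * gen N rp rm h z))) by (intros; unfold Rdiv; ring).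
  rewrite lsum_plus, lsum_scal.
  assert (Z: lsum (configs n) (fun z => mst z * gen N rp rm h z) = 0).
  { unfold n. rewrite <- sumc_lsum, <- dual1. rewrite sumc_lsum. rewrite (lsum_ext_in _ _ (fun _ => 0)).
    rewrite lsum_const. ring. intros e He. rewrite Hst; auto. ring. }
  rewrite Z. ring. Qed.

End QB.

Lemma exp3 a : exp (3 * a) = exp a ^ 3.
Proof. replace (3 * a) with (a + (a + a)) by ring. rewrite !exp_plus. simpl. ring. Qed.

Lemma final_arith (M t D : R) : 1 <= M -> 0 < t -> D <= 2 ->
  D <= 4 * (2 * M + 1) * (M + 1) ^ 2 * exp (- t / (M + 1) ^ 2) ->
  D <= 8 * M * exp (- / 12 * t / M ^ 2).
Proof. intros HM Ht H1 H2.
  set (u := exp (- / 12 * t / M ^ 2)).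
  assert (Hu: 0 < u) by apply exp_pos.
  assert (E: exp (- t / (M + 1) ^ 2) <= u ^ 3).
  { unfold u. rewrite <- exp3.
    assert (HM2: 0 < M ^ 2) by nra.
    destruct (Req_dec (- t / (M + 1) ^ 2) (3 * (- / 12 * t / M ^ 2))) as [e|ne]; [rewrite e; lra|].
    left. apply exp_increasing.
    assert (t / (4 * M ^ 2) <= t / (M + 1) ^ 2).
    { unfold Rdiv. apply Rmult_le_compat_l. lra. apply Rinv_le_contravar; nra. }
    assert (3 * (- / 12 * t / M ^ 2) = - (t / (4 * M ^ 2))) by (field; lra).
    unfold Rdiv in *. lra. }
  assert (C: 4 * (2 * M + 1) * (M + 1) ^ 2 <= 48 * M ^ 3) by nra.
  assert (D <= 48 * M ^ 3 * u ^ 3).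
  { eapply Rle_trans. apply H2. apply Rmult_le_compat; try nra.
    assert (0 < (M+1)^2) by nra. pose proof (pos_INR 0). left; apply exp_pos. }
  destruct (Rle_dec 2 (8 * M * u)). lra.
  assert (M * u < 1/4) by lra.
  assert (0 < M * u) by nra.
  assert (48 * M ^ 3 * u ^ 3 = 48 * (M * u) * ((M * u) * (M * u))) by ring.
  assert ((M * u) * (M * u) < 1/16) by nra.
  nra. Qed.

Theorem theorem2p1 (rp rm : R) (Hp : rp <= 1) (Hpm : rm < rp) (Hm : 0 <= rm) :
  exists c b : R, 0 < b /\
    forall (N : nat), (1 <= N)%nat ->
    forall (mu : config -> R), is_prob N mu ->
    forall (t : R), 0 < t ->
    forall (nu mst : config -> R),
      is_law_at N rp rm mu t nu ->
      is_stationary N rp rm mst ->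
      tvnorm N (fun eta => nu eta - mst eta) <= c * INR N * exp (- b * t / (INR N ^ 2)).
Proof.
  exists 8, (/ 12). split. lra.
  intros N HN mu Hmu t Ht nu mst Hlaw Hst.
  set (n0 := (2 * N + 1)%nat).
  set (s := fun eta : config => if Rle_dec 0 (nu eta - mst eta) then 1 else -1).
  assert (Hs1: forall w, Rabs (s w) <= 1).
  { intros w; unfold s; destruct (Rle_dec 0 (nu w - mst w)); [rewrite Rabs_R1 | rewrite Rabs_left by lra]; lra. }
  assert (HsL: Lip N (fun _ => 2) s).
  { intros z _ x _. unfold Rminus. eapply Rle_trans. apply Rabs_triang. rewrite Rabs_Ropp.
    pose proof (Hs1 (setc z x true)); pose proof (Hs1 (setc z x false)); lra. }
  set (q := qq N). assert (Hq: 0 < q) by apply qq_pos.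
  set (F := fun k => sumc n0 (fun z => mu z * Nat.iter k (gen N rp rm) s z)).
  set (A := sumc n0 (fun eta => s eta * nu eta)).
  set (B0 := sumc n0 (fun z => mst z * s z)).
  destruct Hmu as [Hmu0 Hmu1]. destruct Hst as [[Hmst0 Hmst1] Hst'] eqn:HstE.
  assert (HD: tvnorm N (fun eta => nu eta - mst eta) = A - B0).
  { unfold tvnorm, A, B0. fold n0. rewrite !sumc_lsum. rewrite <- lsum_minus. apply lsum_ext. intros eta.
    unfold s. destruct (Rle_dec 0 (nu eta - mst eta)).
    rewrite Rabs_right by lra. ring. rewrite Rabs_left by lra. ring. }
  assert (Hser1: is_series (fun k => t ^ k / INR (fact k) * F k) A).
  { unfold A. rewrite sumc_lsum.
    eapply is_series_ext; [|apply (ser_list (configs n0) (fun eta k => s eta * (t ^ k / INR (fact k) * Nat.iter k (genM N rp rm) mu eta)))].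
    - intros k. simpl. rewrite (lsum_ext _ _ (fun eta => t ^ k / INR (fact k) * (s eta * Nat.iter k (genM N rp rm) mu eta)))
        by (intros; ring). rewrite lsum_scal. f_equal. unfold F. rewrite <- sumc_lsum. unfold n0. apply dualk.
    - intros eta Heta. apply ser_scal. apply is_series_Reals. apply Hlaw. auto. }
  assert (HF: forall k, Rabs (F k) <= (2 * q) ^ k).
  { intros k. unfold F. rewrite sumc_lsum. eapply Rle_trans. apply lsum_abs.
    eapply Rle_trans. apply lsum_le with (g := fun z => mu z * (2 * q) ^ k).
    - intros z Hz. rewrite Rabs_mult. rewrite (Rabs_right (mu z)) by (apply Rle_ge; apply Hmu0; auto).
      apply Rmult_le_compat_l. apply Hmu0; auto.
      pose proof (iter_gen_bound N rp rm Hp Hpm Hm k s 1 Hs1 z). rewrite Rmult_1_r in H. auto.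
    - rewrite (lsum_ext _ _ (fun z => (2 * q) ^ k * mu z)) by (intros; ring). rewrite lsum_scal.
      rewrite <- sumc_lsum. fold n0 in Hmu1. rewrite Hmu1. lra. }
  assert (Habs_a: ex_series (fun k => Rabs (t ^ k / INR (fact k) * F k))).
  { apply (@ex_series_le R_AbsRing R_CompleteNormedModule _ (fun k => (2 * q * t) ^ k / INR (fact k))).
    - intros k. unfold norm; simpl. unfold abs; simpl. rewrite Rabs_Rabsolu. rewrite Rabs_mult.
      rewrite (Rabs_right (t ^ k / INR (fact k))).
      2:{ apply Rle_ge. unfold Rdiv. apply Rmult_le_pos. apply pow_le; lra. left; apply Rinv_0_lt_compat, lt_0_INR, lt_O_fact. }
      rewrite Rpow_mult_distr. unfold Rdiv.
      replace ((2 * q) ^ k * t ^ k * / INR (fact k)) with (t ^ k * / INR (fact k) * (2 * q) ^ k) by ring.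
      apply Rmult_le_compat_l; auto. apply Rmult_le_pos. apply pow_le; lra. left; apply Rinv_0_lt_compat, lt_0_INR, lt_O_fact.
    - eexists. apply ser_exp. }
  assert (Hser2: is_series (fun m => (q * t) ^ m / INR (fact m)) (exp (q * t))) by apply ser_exp.
  assert (Hbnn: forall m, 0 <= (q * t) ^ m / INR (fact m)).
  { intros m. unfold Rdiv. apply Rmult_le_pos. apply pow_le; nra. left; apply Rinv_0_lt_compat, lt_0_INR, lt_O_fact. }
  assert (Habs_b: ex_series (fun m => Rabs ((q * t) ^ m / INR (fact m)))).
  { eexists. eapply is_series_ext; [|apply Hser2]. intros; rewrite Rabs_right; auto. apply Rle_ge; auto. }
  pose proof (is_series_mult _ _ _ _ Hser1 Hser2 Habs_a Habs_b) as Hc.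
  set (G := fun m => sumc n0 (fun z => mu z * Nat.iter m (Qop N rp rm) s z)).
  assert (HG: forall m, sum_f_R0 (fun k => t ^ k / INR (fact k) * F k * ((q * t) ^ (m - k) / INR (fact (m - k)))) m
      = (q * t) ^ m / INR (fact m) * G m).
  { intros m. unfold G. rewrite sumc_lsum.
    rewrite (lsum_ext _ _ (fun z => sum_f_R0 (fun k => bin m k * (/ q) ^ k * (mu z * Nat.iter k (gen N rp rm) s z)) m)).
    2:{ intros z. rewrite Q_binom. rewrite scal_sum. apply sum_eq. intros; unfold q; ring. }
    rewrite lsum_sumf. rewrite scal_sum. apply sum_eq. intros k Hk.
    rewrite lsum_scal. rewrite <- sumc_lsum. fold (F k).
    rewrite bin_fact by auto.
    pose proof (INR_fact_neq_0 k). pose proof (INR_fact_neq_0 (m - k)). pose proof (INR_fact_neq_0 m).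
    replace ((q * t) ^ m) with ((q * t) ^ k * (q * t) ^ (m - k)) by (rewrite <- pow_add; f_equal; lia).
    rewrite !Rpow_mult_distr. rewrite pow_inv.
    pose proof (pow_nonzero q k ltac:(lra)).
    field. repeat split; auto. }
  assert (Hser3: is_series (fun m => (q * t) ^ m / INR (fact m) * G m) (A * exp (q * t))).
  { eapply is_series_ext; [|apply Hc]. intros m. simpl. rewrite <- HG. apply sum_eq. intros; reflexivity. }
  assert (HGB: forall m, sumc n0 (fun z => mst z * Nat.iter m (Qop N rp rm) s z) = B0).
  { intros m. unfold B0, n0. apply mst_inv. auto. }
  assert (Hser4: is_series (fun m => (q * t) ^ m / INR (fact m) * (G m - B0)) ((A - B0) * exp (q * t))).
  { replace ((A - B0) * exp (q * t)) with (A * exp (q * t) - exp (q * t) * B0) by ring.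
    eapply is_series_ext; [|apply ser_minus; [apply Hser3|apply (is_series_scal_r B0 _ _ Hser2)]].
    intros; simpl; ring. }
  assert (Hw: forall (w X : config -> R), (forall z, In z (configs n0) -> 0 <= w z) -> sumc n0 w = 1 ->
     (forall z, Rabs (X z) <= 1) -> Rabs (sumc n0 (fun z => w z * X z)) <= 1).
  { intros w X Hw0 Hw1 HX. rewrite sumc_lsum. eapply Rle_trans. apply lsum_abs.
    eapply Rle_trans. apply lsum_le with (g := w).
    - intros z Hz. rewrite Rabs_mult, Rabs_right by (apply Rle_ge; auto).
      pose proof (HX z). pose proof (Hw0 z Hz). nra.
    - rewrite <- sumc_lsum, Hw1. lra. }
  assert (Hbd1: forall m, G m - B0 <= 2).
  { intros m. rewrite <- (HGB m). unfold G.
    pose proof (Hw mu (Nat.iter m (Qop N rp rm) s) Hmu0 Hmu1 (iterQ_bound N rp rm Hp Hpm Hm m s Hs1)).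
    pose proof (Hw mst (Nat.iter m (Qop N rp rm) s) Hmst0 Hmst1 (iterQ_bound N rp rm Hp Hpm Hm m s Hs1)).
    match type of H with Rabs ?X <= _ => pose proof (Rle_abs X) end.
    match type of H0 with Rabs ?Y <= _ => pose proof (Rle_abs (- Y)); rewrite Rabs_Ropp in * end. lra. }
  pose proof (theta_pos N) as Hth.
  set (Cst := 4 * INR n0 * Hmax N).
  assert (Hbd2: forall m, G m - B0 <= Cst * theta N ^ m).
  { intros m. rewrite <- (HGB m). unfold G.
    set (X := Nat.iter m (Qop N rp rm) s). set (X0 := X (repeat false n0)).
    set (U := lsum (seq 0 n0) (Nat.iter m (Kop N) (fun _ => 2))).
    assert (HXU: forall z, In z (configs n0) -> Rabs (X z - X0) <= U).
    { intros z Hz. apply configs_len in Hz. unfold X0, U, n0. apply path_bound; auto.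
      apply Lip_iter; auto. }
    assert (HU: U <= INR n0 * (2 * theta N ^ m * Hmax N)).
    { unfold U. rewrite <- (length_seq n0 0) at 2. rewrite <- lsum_const. apply lsum_le.
      intros x Hx. apply in_seq in Hx. eapply Rle_trans. apply Kit_bound; auto. unfold n0 in *; lia.
      pose proof (hh_bounds N HN x ltac:(unfold n0 in *; lia)). pose proof (pow_le _ m Hth). nra. }
    assert (E: sumc n0 (fun z => mu z * X z) - sumc n0 (fun z => mst z * X z) =
               lsum (configs n0) (fun z => (mu z - mst z) * (X z - X0))).
    { rewrite (lsum_ext _ _ (fun z => (mu z * X z - mst z * X z) - X0 * (mu z - mst z))) by (intros; ring).
      rewrite lsum_minus, lsum_scal, !lsum_minus. rewrite <- !sumc_lsum. fold n0 in Hmu1, Hmst1.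
      rewrite Hmu1, Hmst1. ring. }
    rewrite E. eapply Rle_trans. apply Rle_abs. eapply Rle_trans. apply lsum_abs.
    eapply Rle_trans. apply lsum_le with (g := fun z => U * (mu z + mst z)).
    - intros z Hz. rewrite Rabs_mult. pose proof (HXU z Hz). pose proof (Hmu0 z Hz). pose proof (Hmst0 z Hz).
      assert (Rabs (mu z - mst z) <= mu z + mst z) by (apply Rabs_le; lra).
      pose proof (Rabs_pos (mu z - mst z)). pose proof (Rabs_pos (X z - X0)). nra.
    - rewrite lsum_scal, lsum_plus. rewrite <- !sumc_lsum. fold n0 in Hmu1, Hmst1. rewrite Hmu1, Hmst1.
      unfold Cst. pose proof (pow_le _ m Hth). assert (0 <= INR n0) by apply pos_INR. nra. }
  assert (Hexp_pos: 0 < exp (q * t)) by apply exp_pos.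
  assert (D1: A - B0 <= 2).
  { assert ((A - B0) * exp (q * t) <= exp (q * t) * 2).
    { eapply ser_le; [|apply Hser4|apply (is_series_scal_r 2 _ _ Hser2)].
      intros m. simpl. pose proof (Hbnn m). pose proof (Hbd1 m). nra. }
    nra. }
  assert (D2: A - B0 <= Cst * exp (- t / Hmax N)).
  { assert (Hs5: is_series (fun m => Cst * ((q * t * theta N) ^ m / INR (fact m))) (Cst * exp (q * t * theta N)))
      by (apply ser_scal; apply ser_exp).
    assert ((A - B0) * exp (q * t) <= Cst * exp (q * t * theta N)).
    { eapply ser_le; [|apply Hser4|apply Hs5].
      intros m. pose proof (Hbnn m). pose proof (Hbd2 m).
      cbv beta. rewrite (Rpow_mult_distr (q * t) (theta N)). unfold Rdiv.
      replace (Cst * ((q * t) ^ m * theta N ^ m * / INR (fact m))) with ((q * t) ^ m * / INR (fact m) * (Cst * theta N ^ m)) by ring.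
      apply Rmult_le_compat_l; auto. }
    assert (Ee: exp (q * t * theta N) = exp (q * t) * exp (- t / Hmax N)).
    { rewrite <- exp_plus. f_equal. unfold theta. fold q. assert (0 < Hmax N) by (unfold Hmax; pose proof (pos_INR N); nra).
      field. lra. }
    rewrite Ee in H.
    assert (0 <= Cst) by (unfold Cst; unfold Hmax; pose proof (pos_INR n0); pose proof (pos_INR N); apply Rmult_le_pos; [lra| apply pow_le; lra]).
    assert (0 < exp (- t / Hmax N)) by apply exp_pos.
    nra. }
  rewrite HD. apply final_arith; auto.
  - apply (le_INR 1). auto.
  - replace (4 * (2 * INR N + 1) * (INR N + 1) ^ 2) with Cst; auto.
    unfold Cst, Hmax, n0. rewrite plus_INR, mult_INR. simpl. ring.
Qed.
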